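(* Let $q\ge1$ be an integer. Suppose there are constants $\varepsilon,\delta>0$ and a Borel set $K\subset[0,1)$ such that: (i) $e(q,x;\varepsilon,\delta)=1$ for $x\in K$ and $e(q,x;\varepsilon,\delta)\le2$ for $x\in[0,1)\setminus K$; (ii) if $(\mathbf{u},\mathbf{v})\in E(q,x;\varepsilon,\delta)$ for some $x\in[0,1)\setminus K$ with $\mathbf{u}\ne\mathbf{v}$, then both $x(\mathbf{u})\in K$ and $x(\mathbf{v})\in K$. Then $\sigma(q)\le\sqrt2$.
   Context: Standing setup: $b\ge2$ integer, $\mathcal{A}=\{0,\dots,b-1\}$, $\gamma\in(1/b,1)$, $\psi$ a $\mathbb{Z}$-periodic $C^1$ function. $S(x,\mathbf{i})=\sum_{n\ge1}\gamma^{n-1}\psi\big(\frac{x+i_1+i_2b+\cdots+i_nb^{n-1}}{b^n}\big)$, $S'=\partial_xS$. For $\mathbf{u}\in\mathcal{A}^q$, $x(\mathbf{u})=(x+u_1+u_2b+\cdots+u_qb^{q-1})/b^q$. Sequences $\mathbf{i},\mathbf{j}$ are $(\varepsilon,\delta)$-tangent at $x_0$ if $|S(x_0,\mathbf{i})-S(x_0,\mathbf{j})|\le\varepsilon$ and $|S'(x_0,\mathbf{i})-S'(x_0,\mathbf{j})|\le\delta$. $E(q,x_0;\varepsilon,\delta)$: pairs $(\mathbf{k},\mathbf{l})\in\mathcal{A}^q\times\mathcal{A}^q$ such that some concatenations $\mathbf{ku},\mathbf{lv}$ are $(\varepsilon,\delta)$-tangent at $x_0$; $e(q,x_0;\varepsilon,\delta)=\max_{\mathbf{k}}\#\{\mathbf{l}:(\mathbf{k},\mathbf{l})\in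 E(q,x_0;\varepsilon,\delta)\}$. Weight function: measurable $\omega:[0,1)\to(0,\infty)$ with $\omega,1/\omega$ bounded. Admissible testing function of order $q$: measurable $V:[0,1)\times\mathcal{A}^q\times\mathcal{A}^q\to[0,\infty)$ such that for some $\varepsilon,\delta>0$, $V(x,\mathbf{u},\mathbf{v})V(x,\mathbf{v},\mathbf{u})\ge1$ whenever $x\in[0,1)$ and $(\mathbf{u},\mathbf{v})\in E(q,x;\varepsilon,\delta)$. $\Sigma_{V,\omega}(x)=\sup_{\mathbf{u}}\frac{\omega(x)}{\omega(x(\mathbf{u}))}\sum_{\mathbf{v}}V(x,\mathbf{u},\mathbf{v})$; $\sigma(q)=\inf_{\omega,V}\|\Sigma_{V,\omega}\|_\infty$. *)

(* Defs.v *)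
From Stdlib Require Import Reals Lra Lia List Classical ClassicalEpsilon.
Import ListNotations.
Open Scope R_scope.

(** Digit sequences i = (i_1, i_2, ...) are functions [i : nat -> nat] with
    [i 0 = i_1], [i 1 = i_2], ...; they lie in A^N iff [forall n, (i n < b)%nat].
    Finite words u = (u_1,...,u_q) in A^q are lists [[u_1; ...; u_q]]. *)

Definition digits (b : nat) (i : nat -> nat) : Prop := forall n, (i n < b)%nat.

Fixpoint words (b q : nat) : list (list nat) :=
  match q with
  | O => [ [] ]
  | S q' => flat_map (fun d => map (cons d) (words b q')) (seq 0 b)
  end.

Fixpoint digval (b : nat) (i : nat -> nat) (n : nat) : R :=
  match n with
  | O => 0
  | S m => digval b i m + INR (i m) * INR b ^ m
  end.

(** n-th term (0-indexed, n = N-1) of the series defining S(x,i):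
    gamma^(N-1) psi((x + i_1 + ... + i_N b^(N-1)) / b^N) *)
Definition Sterm (b : nat) (gamma : R) (psi : R -> R) (x : R) (i : nat -> nat)
  (n : nat) : R :=
  gamma ^ n * psi ((x + digval b i (S n)) / INR b ^ (S n)).

Definition S (b : nat) (gamma : R) (psi : R -> R) (x : R) (i : nat -> nat) : R :=
  epsilon (inhabits 0) (fun s => infinite_sum (Sterm b gamma psi x i) s).

Definition S' (b : nat) (gamma : R) (psi : R -> R) (x : R) (i : nat -> nat) : R :=
  epsilon (inhabits 0)
    (fun d => derivable_pt_lim (fun y => S b gamma psi y i) x d).

Definition tangent (b : nat) (gamma : R) (psi : R -> R)
  (eps delta x0 : R) (i j : nat -> nat) : Prop :=
  Rabs (S b gamma psi x0 i - S b gamma psi x0 j) <= eps /\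
  Rabs (S' b gamma psi x0 i - S' b gamma psi x0 j) <= delta.

Definition concat (k : list nat) (u : nat -> nat) : nat -> nat :=
  fun n => if Nat.ltb n (length k) then nth n k O else u (n - length k)%nat.

Fixpoint wordval (b : nat) (u : list nat) : R :=
  match u with
  | [] => 0
  | d :: u' => INR d + INR b * wordval b u'
  end.

Definition xw (b : nat) (x : R) (u : list nat) : R :=
  (x + wordval b u) / INR b ^ length u.

Definition inE (b : nat) (gamma : R) (psi : R -> R) (q : nat) (x0 eps delta : R)
  (k l : list nat) : Prop :=
  In k (words b q) /\ In l (words b q) /\
  exists u v : nat -> nat, digits b u /\ digits b v /\
    tangent b gamma psi eps delta x0 (concat k u) (concat l v).

Definition bool_of (P : Prop) : bool :=
  if excluded_middle_informative P then true else false.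

Definition e (b : nat) (gamma : R) (psi : R -> R) (q : nat) (x0 eps delta : R) : nat :=
  fold_right Nat.max O
    (map (fun k => length (filter (fun l => bool_of (inE b gamma psi q x0 eps delta k l))
                                  (words b q)))
         (words b q)).

Inductive borel : (R -> Prop) -> Prop :=
  | borel_interval : forall a c : R, borel (fun x => a < x < c)
  | borel_compl : forall A, borel A -> borel (fun x => ~ A x)
  | borel_union : forall A : nat -> R -> Prop,
      (forall n, borel (A n)) -> borel (fun x => exists n, A n x)
  | borel_ext : forall A B, (forall x, A x <-> B x) -> borel A -> borel B.

Definition measurable01 (f : R -> R) : Prop :=
  forall B, borel B -> borel (fun x => 0 <= x < 1 /\ B (f x)).

Definition null_set (P : R -> Prop) : Prop :=
  forall eta, 0 < eta ->
    exists a c : nat -> R,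
      (forall n, a n <= c n) /\
      (forall x, P x -> exists n, a n < x < c n) /\
      (forall N, sum_f_R0 (fun n => c n - a n) N <= eta).

Definition esssup_le (f : R -> R) (M : R) : Prop :=
  null_set (fun x => 0 <= x < 1 /\ M < f x).

Definition weight (w : R -> R) : Prop :=
  measurable01 w /\
  (forall x, 0 <= x < 1 -> 0 < w x) /\
  (exists M, forall x, 0 <= x < 1 -> w x <= M /\ 1 / w x <= M).

Definition admissible (b : nat) (gamma : R) (psi : R -> R) (q : nat)
  (V : R -> list nat -> list nat -> R) : Prop :=
  (forall u v, In u (words b q) -> In v (words b q) -> measurable01 (fun x => V x u v)) /\
  (forall x u v, 0 <= x < 1 -> In u (words b q) -> In v (words b q) -> 0 <= V x u v) /\
  (exists eps delta, 0 < eps /\ 0 < delta /\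
     forall x u v, 0 <= x < 1 -> inE b gamma psi q x eps delta u v ->
       1 <= V x u v * V x v u).

Definition Sigma (b q : nat) (V : R -> list nat -> list nat -> R) (w : R -> R)
  (x : R) : R :=
  fold_right Rmax 0
    (map (fun u => w x / w (xw b x u) *
                   fold_right Rplus 0 (map (fun v => V x u v) (words b q)))
         (words b q)).

(** sigma(q) <= c, where sigma(q) = inf_{omega,V} ||Sigma_{V,omega}||_oo *)
Definition sigma_le (b : nat) (gamma : R) (psi : R -> R) (q : nat) (c : R) : Prop :=
  forall eta, 0 < eta ->
    exists w V, weight w /\ admissible b gamma psi q V /\
      esssup_le (Sigma b q V w) (c + eta).

(* Main.v *)
Require Import Defs.
From Stdlib Require Import ZArith Reals Ranalysis5 Lra Lia List Classical ClassicalEpsilon FunctionalExtensionality.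
Import ListNotations.
Open Scope R_scope.

Lemma G0 (g C : R) : 0 < g < 1 ->
  Un_cv (sum_f_R0 (fun n => C * g ^ n)) (C / (1 - g)).
Proof.
  intros Hg.
  assert (H := GP_infinite g ltac:(rewrite Rabs_right; lra)).
  unfold Pser in H.
  assert (Hc : Un_cv (fun _ : nat => C) C).
  { intros e He; exists O; intros; unfold Rdist; rewrite Rminus_diag, Rabs_R0; lra. }
  assert (H2 := CV_mult _ _ _ _ Hc H).
  intros e He; destruct (H2 e He) as [N HN]; exists N; intros n Hn.
  specialize (HN n Hn).
  replace (sum_f_R0 (fun n0 : nat => C * g ^ n0) n) with
    (C * sum_f_R0 (fun n0 : nat => 1 * g ^ n0) n).
  - replace (C / (1 - g)) with (C * / (1 - g)) by (unfold Rdiv; ring). exact HN.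
  - rewrite scal_sum. apply sum_eq. intros; ring.
Qed.

Lemma G1 (g C l : R) (a : nat -> R) : 0 < g < 1 ->
  (forall n, Rabs (a n) <= C * g ^ n) -> Un_cv (sum_f_R0 a) l -> Rabs l <= C / (1 - g).
Proof.
  intros Hg Ha Hl.
  apply (sum_cv_maj (fun n => C * g ^ n) (fun n _ => a n) 0 l (C / (1 - g))).
  - exact Hl.
  - apply G0; auto.
  - intros; apply Ha.
Qed.

Lemma G2 (g C : R) (fn : nat -> R -> R) : 0 < g < 1 ->
  (forall n x, Rabs (fn n x) <= C * g ^ n) ->
  forall x, {l | Un_cv (fun N => SP fn N x) l}.
Proof.
  intros Hg Hf. apply CVN_R_CVS. intros r.
  exists (fun n => C * g ^ n). exists (C / (1 - g)). split.
  - assert (HC : 0 <= C) by (specialize (Hf O 0); simpl in Hf;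
      pose proof (Rabs_pos (fn O 0)); lra).
    assert (E : (fun n => sum_f_R0 (fun k => Rabs (C * g ^ k)) n) =
               sum_f_R0 (fun n => C * g ^ n)).
    { apply functional_extensionality; intros n; apply sum_eq; intros.
      rewrite Rabs_right; auto. apply Rle_ge, Rmult_le_pos; auto.
      apply pow_le; lra. }
    rewrite E; apply G0; auto.
  - intros; apply Hf.
Qed.

Lemma per_nat (f : R -> R) : (forall x, f (x + 1) = f x) ->
  forall n x, f (x + INR n) = f x /\ f (x - INR n) = f x.
Proof.
  intros Hf n; induction n; intros x.
  - simpl; split; f_equal; ring.
  - rewrite S_INR. destruct (IHn x) as [H1 H2]; split.
    + replace (x + (INR n + 1)) with ((x + INR n) + 1) by ring. rewrite Hf; auto.
    + rewrite <- H2. rewrite <- (Hf (x - (INR n + 1))). f_equal; ring.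
Qed.

Lemma per_Z (f : R -> R) : (forall x, f (x + 1) = f x) ->
  forall z x, f (x - IZR z) = f x.
Proof.
  intros Hf z x. destruct (Z.le_gt_cases 0 z).
  - rewrite <- (Z2Nat.id z) by auto. rewrite <- INR_IZR_INZ. apply per_nat; auto.
  - replace z with (- Z.of_nat (Z.to_nat (- z)))%Z by lia.
    rewrite opp_IZR, <- INR_IZR_INZ. replace (x - - INR (Z.to_nat (- z))) with
      (x + INR (Z.to_nat (- z))) by ring. apply per_nat; auto.
Qed.

Lemma red01 (x : R) : exists z : Z, 0 <= x - IZR z < 1.
Proof.
  destruct (archimed x) as [H1 H2]. exists (up x - 1)%Z.
  rewrite minus_IZR. simpl. lra.
Qed.

Lemma per_bound (f : R -> R) : (forall x, f (x + 1) = f x) -> continuity f ->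
  exists M, 0 <= M /\ forall x, Rabs (f x) <= M.
Proof.
  intros Hp Hc.
  destruct (continuity_ab_maj (fun x => Rabs (f x)) 0 1 ltac:(lra)) as [m [Hm _]].
  { intros c _. apply (continuity_pt_comp f Rabs). apply Hc. apply Rcontinuity_abs. }
  exists (Rabs (f m)). split. apply Rabs_pos.
  intros x. destruct (red01 x) as [z Hz]. rewrite <- (per_Z f Hp z x).
  apply Hm; lra.
Qed.

Lemma per_unif (f : R -> R) : (forall x, f (x + 1) = f x) -> continuity f ->
  forall eta, 0 < eta -> exists rho, 0 < rho /\
    forall x y, Rabs (x - y) < rho -> Rabs (f x - f y) < eta.
Proof.
  intros Hp Hc eta Heta.
  destruct (Heine f (fun c => -1 <= c <= 2) (compact_P3 (-1) 2)
    (fun x _ => Hc x) (mkposreal eta Heta)) as [d Hd].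
  exists (Rmin d 1). split. { apply Rmin_pos; [apply cond_pos | lra]. }
  intros x y Hxy. destruct (red01 x) as [z Hz].
  rewrite <- (per_Z f Hp z x), <- (per_Z f Hp z y).
  assert (H1 := Rmin_l d 1). assert (H2 := Rmin_r d 1).
  assert (Hy : Rabs (x - y) < 1) by lra. apply Rabs_def2 in Hy.
  apply (Hd (x - IZR z) (y - IZR z)); simpl; try lra.
  replace (x - IZR z - (y - IZR z)) with (x - y) by ring. lra.
Qed.

Lemma dper (psi dpsi : R -> R) : (forall x, psi (x + 1) = psi x) ->
  (forall x, derivable_pt_lim psi x (dpsi x)) -> forall x, dpsi (x + 1) = dpsi x.
Proof.
  intros Hp Hd x.
  assert (H : derivable_pt_lim (comp psi (fun y => y + 1)) x (dpsi (x + 1) * 1)).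
  { apply derivable_pt_lim_comp; [|apply Hd].
    assert (H0 := derivable_pt_lim_plus id (fct_cte 1) x 1 0 (derivable_pt_lim_id x) (derivable_pt_lim_const 1 x)).
    rewrite Rplus_0_r in H0. exact H0. }
  assert (E : comp psi (fun y => y + 1) = psi).
  { apply functional_extensionality; intros y; unfold comp; apply Hp. }
  rewrite E in H. rewrite Rmult_1_r in H. eapply uniqueness_limite; eauto.
Qed.

Lemma lipschitz (psi dpsi : R -> R) M : (forall x, derivable_pt_lim psi x (dpsi x)) ->
  (forall x, Rabs (dpsi x) <= M) -> forall x y, Rabs (psi x - psi y) <= M * Rabs (x - y).
Proof.
  intros Hd HM x y. destruct (MVT_abs psi dpsi y x (fun c _ => Hd c)) as [c [Hc _]].
  rewrite Hc. apply Rmult_le_compat_r; [apply Rabs_pos | apply HM].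
Qed.

Definition Tn (b : nat) (i : nat -> nat) (n : nat) (x : R) : R :=
  (x + digval b i (Datatypes.S n)) / INR b ^ Datatypes.S n.

Definition dterm (b : nat) (gamma : R) (dpsi : R -> R) (i : nat -> nat) (n : nat) (x : R) : R :=
  (gamma ^ n * / INR b ^ Datatypes.S n) * dpsi ((x + digval b i (Datatypes.S n)) / INR b ^ Datatypes.S n).

Lemma affine_deriv c D x : derivable_pt_lim (fun y => (y + c) / D) x (/ D).
Proof.
  assert (E : (fun y => (y + c) / D) = mult_real_fct (/ D) (id + fct_cte c)%F).
  { apply functional_extensionality; intros y; unfold mult_real_fct, plus_fct, id, fct_cte, Rdiv; ring. }
  rewrite E. replace (/ D) with (/ D * (1 + 0)) at 2 by ring.
  apply derivable_pt_lim_scal, derivable_pt_lim_plus; [apply derivable_pt_lim_id|apply derivable_pt_lim_const].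
Qed.

Lemma affine_cont c D x : continuity_pt (fun y => (y + c) / D) x.
Proof. apply derivable_continuous_pt. exists (/ D). apply affine_deriv. Qed.

Lemma term_deriv b gamma psi dpsi i n x :
  (forall x, derivable_pt_lim psi x (dpsi x)) ->
  derivable_pt_lim (fun y => Sterm b gamma psi y i n) x (dterm b gamma dpsi i n x).
Proof.
  intros Hd.
  assert (H := derivable_pt_lim_scal _ (gamma ^ n) x _
     (derivable_pt_lim_comp _ psi x _ _ (affine_deriv (digval b i (Datatypes.S n)) (INR b ^ Datatypes.S n) x) (Hd _))).
  unfold dterm. replace (gamma ^ n * / INR b ^ Datatypes.S n * dpsi ((x + digval b i (Datatypes.S n)) / INR b ^ Datatypes.S n))
    with (gamma ^ n * (dpsi ((x + digval b i (Datatypes.S n)) / INR b ^ Datatypes.S n) * / INR b ^ Datatypes.S n)) by ring.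
  exact H.
Qed.

Lemma term_cont b gamma dpsi i n x : continuity dpsi ->
  continuity_pt (dterm b gamma dpsi i n) x.
Proof.
  intros Hc. unfold dterm.
  apply (continuity_pt_scal (comp dpsi (fun y => (y + digval b i (Datatypes.S n)) / INR b ^ Datatypes.S n))).
  apply continuity_pt_comp; [apply affine_cont | apply Hc].
Qed.

Lemma SP_deriv b gamma psi dpsi i x N :
  (forall x, derivable_pt_lim psi x (dpsi x)) ->
  derivable_pt_lim (fun y => SP (fun n y => Sterm b gamma psi y i n) N y) x
     (SP (dterm b gamma dpsi i) N x).
Proof.
  intros Hd. induction N.
  - exact (term_deriv b gamma psi dpsi i 0 x Hd).
  - exact (derivable_pt_lim_plus _ _ x _ _ IHN (term_deriv b gamma psi dpsi i (Datatypes.S N) x Hd)).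
Qed.

Lemma SP_cont b gamma dpsi i x N : continuity dpsi ->
  continuity_pt (SP (dterm b gamma dpsi i) N) x.
Proof.
  intros Hc. induction N.
  - exact (term_cont b gamma dpsi i 0 x Hc).
  - exact (continuity_pt_plus _ _ x IHN (term_cont b gamma dpsi i (Datatypes.S N) x Hc)).
Qed.

Lemma INRb_pow b n : (2 <= b)%nat -> 1 <= INR b ^ n.
Proof. intros Hb. apply pow_R1_Rle. apply le_INR in Hb. simpl in Hb. lra. Qed.

Lemma Sterm_bound b gamma psi M x i n : 0 < gamma ->
  (forall x, Rabs (psi x) <= M) -> Rabs (Sterm b gamma psi x i n) <= M * gamma ^ n.
Proof.
  intros Hg HM. unfold Sterm. rewrite Rabs_mult, Rabs_right.
  - rewrite Rmult_comm. apply Rmult_le_compat_r; [apply pow_le; lra | apply HM].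
  - apply Rle_ge, pow_le; lra.
Qed.

Lemma dterm_bound b gamma dpsi M x i n : (2 <= b)%nat -> 0 < gamma ->
  (forall x, Rabs (dpsi x) <= M) -> Rabs (dterm b gamma dpsi i n x) <= M * gamma ^ n.
Proof.
  intros Hb Hg HM. unfold dterm. pose proof (INRb_pow b (Datatypes.S n) Hb) as H1.
  assert (Hp : 0 < gamma ^ n) by (apply pow_lt; lra).
  assert (Hi : 0 < / INR b ^ Datatypes.S n <= 1).
  { split. apply Rinv_0_lt_compat; lra. rewrite <- Rinv_1. apply Rinv_le_contravar; lra. }
  rewrite Rabs_mult, Rabs_right.
  2:{ apply Rle_ge, Rmult_le_pos; lra. }
  specialize (HM ((x + digval b i (Datatypes.S n)) / INR b ^ Datatypes.S n)).
  pose proof (Rabs_pos (dpsi ((x + digval b i (Datatypes.S n)) / INR b ^ Datatypes.S n))).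
  apply Rle_trans with (gamma ^ n * M). 2: lra.
  apply Rle_trans with (gamma ^ n * Rabs (dpsi ((x + digval b i (Datatypes.S n)) / INR b ^ Datatypes.S n))).
  - apply Rmult_le_compat_r; auto. nra.
  - apply Rmult_le_compat_l; lra.
Qed.

Lemma S_spec b gamma psi M x i : 0 < gamma < 1 -> (forall x, Rabs (psi x) <= M) ->
  Un_cv (sum_f_R0 (Sterm b gamma psi x i)) (S b gamma psi x i).
Proof.
  intros Hg HM.
  destruct (G2 gamma M (fun n y => Sterm b gamma psi y i n) Hg
    (fun n y => Sterm_bound b gamma psi M y i n ltac:(lra) HM) x) as [l Hl].
  unfold S. apply (epsilon_spec (inhabits 0) (fun s => infinite_sum (Sterm b gamma psi x i) s)).
  exists l. exact Hl.
Qed.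

Lemma S'_spec b gamma psi dpsi M x i : (2 <= b)%nat -> 0 < gamma < 1 ->
  (forall x, Rabs (psi x) <= M) -> (forall x, Rabs (dpsi x) <= M) ->
  (forall x, derivable_pt_lim psi x (dpsi x)) -> continuity dpsi ->
  Un_cv (sum_f_R0 (fun n => dterm b gamma dpsi i n x)) (S' b gamma psi x i).
Proof.
  intros Hb Hg HM HM' Hd Hc.
  set (cv := G2 gamma M (dterm b gamma dpsi i) Hg
    (fun n y => dterm_bound b gamma dpsi M y i n Hb ltac:(lra) HM')).
  set (r := mkposreal (Rabs x + 1) ltac:(pose proof (Rabs_pos x); lra)).
  assert (Hcvn : CVN_r (dterm b gamma dpsi i) r).
  { exists (fun n => M * gamma ^ n). exists (M / (1 - gamma)). split.
    - assert (HC : 0 <= M) by (pose proof (Rabs_pos (psi 0)); specialize (HM 0); lra).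
      assert (E : (fun n => sum_f_R0 (fun k => Rabs (M * gamma ^ k)) n) =
               sum_f_R0 (fun n => M * gamma ^ n)).
      { apply functional_extensionality; intros n; apply sum_eq; intros.
        rewrite Rabs_right; auto. apply Rle_ge, Rmult_le_pos; auto.
        apply pow_le; lra. }
      rewrite E; apply G0; auto.
    - intros; apply dterm_bound; auto; lra. }
  assert (HU := CVN_CVU _ cv r Hcvn).
  assert (Hx : Boule 0 r x) by (unfold Boule; simpl; rewrite Rminus_0_r; lra).
  assert (HD := derivable_pt_lim_CVU
    (fun N => SP (fun n y => Sterm b gamma psi y i n) N)
    (fun N => SP (dterm b gamma dpsi i) N)
    (fun y => S b gamma psi y i) (SFL _ cv) x 0 r Hx
    (fun y N _ => SP_deriv b gamma psi dpsi i y N Hd)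
    (fun y _ => S_spec b gamma psi M y i Hg HM) HU
    (CVU_continuity _ _ 0 r HU (fun n y _ => SP_cont b gamma dpsi i y n Hc))).
  assert (E : S' b gamma psi x i = SFL _ cv x).
  { eapply uniqueness_limite; [|exact HD].
    unfold S'. apply (epsilon_spec (inhabits 0)
      (fun d => derivable_pt_lim (fun y => S b gamma psi y i) x d)). eauto. }
  rewrite E. unfold SFL. destruct (cv x) as [l Hl]. exact Hl.
Qed.

Lemma cv_diff (a c : nat -> R) la lc : Un_cv (sum_f_R0 a) la -> Un_cv (sum_f_R0 c) lc ->
  Un_cv (sum_f_R0 (fun n => a n - c n)) (la - lc).
Proof.
  intros H1 H2. assert (H := CV_minus _ _ _ _ H1 H2).
  assert (E : (fun n => sum_f_R0 a n - sum_f_R0 c n) = sum_f_R0 (fun n => a n - c n)).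
  { apply functional_extensionality; intros; rewrite minus_sum; auto. }
  rewrite <- E; exact H.
Qed.

Lemma T_diff b i n x y : (2 <= b)%nat ->
  Rabs ((x + digval b i (Datatypes.S n)) / INR b ^ Datatypes.S n -
        (y + digval b i (Datatypes.S n)) / INR b ^ Datatypes.S n) <= Rabs (x - y).
Proof.
  intros Hb. pose proof (INRb_pow b (Datatypes.S n) Hb) as H1.
  replace ((x + digval b i (Datatypes.S n)) / INR b ^ Datatypes.S n -
        (y + digval b i (Datatypes.S n)) / INR b ^ Datatypes.S n) with
    ((x - y) * / INR b ^ Datatypes.S n) by (field; lra).
  rewrite Rabs_mult, (Rabs_right (/ _)).
  2:{ apply Rle_ge, Rlt_le, Rinv_0_lt_compat; lra. }
  assert (Hi : 0 < / INR b ^ Datatypes.S n <= 1).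
  { split. apply Rinv_0_lt_compat; lra. rewrite <- Rinv_1. apply Rinv_le_contravar; lra. }
  pose proof (Rabs_pos (x - y)). nra.
Qed.

Lemma equicont b gamma psi dpsi M : (2 <= b)%nat -> 0 < gamma < 1 ->
  (forall x, Rabs (psi x) <= M) -> (forall x, Rabs (dpsi x) <= M) ->
  (forall x, derivable_pt_lim psi x (dpsi x)) -> continuity dpsi ->
  (forall x, dpsi (x + 1) = dpsi x) ->
  forall eta, 0 < eta -> exists rho, 0 < rho /\ forall x y i, Rabs (x - y) < rho ->
    Rabs (S b gamma psi x i - S b gamma psi y i) <= eta /\
    Rabs (S' b gamma psi x i - S' b gamma psi y i) <= eta.
Proof.
  intros Hb Hg HM HM' Hd Hc Hp eta Heta.
  assert (HM0 : 0 <= M) by (pose proof (Rabs_pos (psi 0)); specialize (HM 0); lra).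
  destruct (per_unif dpsi Hp Hc (eta * (1 - gamma)) ltac:(nra)) as [r1 [Hr1 Hu]].
  set (r2 := eta * (1 - gamma) / (M + 1)).
  assert (Hr2 : 0 < r2) by (unfold r2; apply Rdiv_lt_0_compat; nra).
  exists (Rmin r1 r2). split. apply Rmin_pos; auto.
  intros x y i Hxy. assert (H1 := Rmin_l r1 r2). assert (H2 := Rmin_r r1 r2).
  split.
  - assert (Hcv := cv_diff _ _ _ _ (S_spec b gamma psi M x i Hg HM) (S_spec b gamma psi M y i Hg HM)).
    eapply Rle_trans. eapply (G1 gamma (M * Rabs (x - y))); [exact Hg | | exact Hcv].
    + intros n. unfold Sterm. rewrite <- Rmult_minus_distr_l, Rabs_mult, Rabs_right.
      2:{ apply Rle_ge, pow_le; lra. }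
      rewrite Rmult_comm. apply Rmult_le_compat_r. apply pow_le; lra.
      eapply Rle_trans. apply (lipschitz psi dpsi M Hd HM').
      apply Rmult_le_compat_l; auto. apply T_diff; auto.
    + apply Rle_trans with (M * r2 / (1 - gamma)).
      * unfold Rdiv. apply Rmult_le_compat_r. apply Rlt_le, Rinv_0_lt_compat; lra.
        apply Rmult_le_compat_l; lra.
      * unfold r2. apply Rle_trans with (eta * (M / (M + 1))).
        -- right. field. lra.
        -- assert (M / (M + 1) <= 1). { apply Rmult_le_reg_r with (M + 1); [lra|]. unfold Rdiv; rewrite Rmult_assoc, Rinv_l; lra. } nra.
  - assert (Hcv := cv_diff _ _ _ _ (S'_spec b gamma psi dpsi M x i Hb Hg HM HM' Hd Hc)
      (S'_spec b gamma psi dpsi M y i Hb Hg HM HM' Hd Hc)).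
    eapply Rle_trans. eapply (G1 gamma (eta * (1 - gamma))); [exact Hg | | exact Hcv].
    + intros n. unfold dterm. rewrite <- Rmult_minus_distr_l, Rabs_mult, Rabs_right.
      2:{ apply Rle_ge, Rmult_le_pos. apply pow_le; lra.
          apply Rlt_le, Rinv_0_lt_compat. pose proof (INRb_pow b (Datatypes.S n) Hb); lra. }
      pose proof (INRb_pow b (Datatypes.S n) Hb) as HB1.
      assert (Hi : 0 < / INR b ^ Datatypes.S n <= 1).
      { split. apply Rinv_0_lt_compat; lra. rewrite <- Rinv_1. apply Rinv_le_contravar; lra. }
      assert (Hpn : 0 < gamma ^ n) by (apply pow_lt; lra).
      assert (Hu' := Hu ((x + digval b i (Datatypes.S n)) / INR b ^ Datatypes.S n)
                       ((y + digval b i (Datatypes.S n)) / INR b ^ Datatypes.S n)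
                       ltac:(pose proof (T_diff b i n x y Hb); lra)).
      match goal with |- _ * Rabs ?D <= _ => pose proof (Rabs_pos D) end.
      apply Rle_trans with (gamma ^ n * (eta * (1 - gamma))). 2: right; ring.
      apply Rmult_le_compat. nra. lra. nra. lra.
    + right. field. lra.
Qed.

Lemma borel_empty : borel (fun _ => False).
Proof. apply (borel_ext (fun x => 0 < x < 0)); [intros; split; intros; lra | apply borel_interval]. Qed.

Lemma borel_full : borel (fun _ => True).
Proof. apply (borel_ext (fun x => ~ False)); [tauto | apply borel_compl, borel_empty]. Qed.

Lemma borel_const (Q : Prop) : borel (fun _ => Q).
Proof.
  destruct (classic Q).
  - apply (borel_ext (fun _ => True)); [tauto | apply borel_full].
  - apply (borel_ext (fun _ => False)); [tauto | apply borel_empty].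
Qed.

Lemma borel_or A B : borel A -> borel B -> borel (fun x => A x \/ B x).
Proof.
  intros HA HB.
  apply (borel_ext (fun x => exists n, (match n with O => A | _ => B end) x)).
  - intros x; split.
    + intros [[|n] H]; auto.
    + intros [H|H]; [exists O | exists 1%nat]; auto.
  - apply borel_union. intros [|n]; auto.
Qed.

Lemma borel_and A B : borel A -> borel B -> borel (fun x => A x /\ B x).
Proof.
  intros HA HB. apply (borel_ext (fun x => ~ (~ A x \/ ~ B x))).
  - intros x; split; [intros H; split; apply NNPP; tauto | tauto].
  - apply borel_compl, borel_or; apply borel_compl; auto.
Qed.

Lemma borel_01 : borel (fun x => 0 <= x < 1).
Proof.
  apply (borel_ext (fun x => (-1 < x < 1) /\ ~ (-1 < x < 0))).
  - intros x; split; intros H; [destruct H; lra|]. split; [lra|]. lra.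
  - apply borel_and; [apply borel_interval | apply borel_compl, borel_interval].
Qed.

Lemma meas_const c : measurable01 (fun _ => c).
Proof. intros B HB. apply borel_and; [apply borel_01 | apply borel_const]. Qed.

Lemma meas_step (P : R -> Prop) c1 c0 : borel P ->
  measurable01 (fun x => if excluded_middle_informative (P x) then c1 else c0).
Proof.
  intros HP B HB.
  apply (borel_ext (fun x => 0 <= x < 1 /\ ((P x /\ B c1) \/ (~ P x /\ B c0)))).
  - intros x; destruct (excluded_middle_informative (P x)); tauto.
  - apply borel_and; [apply borel_01|].
    apply borel_or; apply borel_and; auto using borel_const, borel_compl.
Qed.

Lemma fold_max_le {A} (f : A -> R) l c : 0 <= c -> (forall a, In a l -> f a <= c) ->
  fold_right Rmax 0 (map f l) <= c.
Proof.
  intros Hc; induction l; simpl; intros H; auto.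
  apply Rmax_lub; auto.
Qed.

Lemma sum_le_list {A} (g h : A -> R) l : (forall v, In v l -> g v <= h v) ->
  fold_right Rplus 0 (map g l) <= fold_right Rplus 0 (map h l).
Proof.
  induction l; simpl; intros H; [lra|].
  apply Rplus_le_compat; auto.
Qed.

Lemma sum_nonneg {A} (g : A -> R) l : (forall v, In v l -> 0 <= g v) ->
  0 <= fold_right Rplus 0 (map g l).
Proof. induction l; simpl; intros H; [lra|]. pose proof (H a (or_introl eq_refl)). pose proof (IHl (fun v Hv => H v (or_intror Hv))). lra. Qed.

Lemma sum_ind_filter {A} (p : A -> bool) l :
  fold_right Rplus 0 (map (fun v => if p v then 1 else 0) l) = INR (length (filter p l)).
Proof.
  induction l; simpl; auto. rewrite IHl. destruct (p a); simpl length; try rewrite S_INR; lra.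
Qed.

Lemma In_le_max {A} (f : A -> nat) l u : In u l -> (f u <= fold_right Nat.max 0 (map f l))%nat.
Proof.
  induction l; simpl; intros H; [contradiction|]. destruct H as [<-|H]; [lia|].
  specialize (IHl H); lia.
Qed.

Definition leq := list_eq_dec Nat.eq_dec.

Lemma count_zero u l : ~ In u l ->
  fold_right Rplus 0 (map (fun v => if leq v u then 1 else 0) l) = 0.
Proof.
  induction l; simpl; intros H; auto. destruct (leq a u); [subst; tauto|]. rewrite IHl; [lra|tauto].
Qed.

Lemma count_le1 u l : NoDup l ->
  fold_right Rplus 0 (map (fun v => if leq v u then 1 else 0) l) <= 1.
Proof.
  induction l; simpl; intros H; [lra|]. inversion H; subst.
  destruct (leq a u).
  - subst. rewrite count_zero; auto; lra.
  - specialize (IHl H3). lra.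
Qed.

Lemma NoDup_words b q : NoDup (words b q).
Proof.
  induction q; simpl. { constructor; [simpl; tauto | constructor]. }
  assert (Hs := seq_NoDup b 0). revert Hs. generalize (seq 0 b). intros l Hl.
  induction l; simpl; [constructor|]. inversion Hl; subst.
  apply NoDup_app; auto.
  - apply NoDup_map_NoDup_ForallPairs; auto. intros x y _ _ E; inversion E; auto.
  - intros w Hw1 Hw2. apply in_map_iff in Hw1. destruct Hw1 as [w1 [<- _]].
    apply in_flat_map in Hw2. destruct Hw2 as [d [Hd Hw]]. apply in_map_iff in Hw.
    destruct Hw as [w2 [E _]]. inversion E; subst. tauto.
Qed.


Lemma abs3 a b a' b' t e : Rabs (a - b) <= t -> Rabs (a - a') <= e -> Rabs (b - b') <= e ->
  Rabs (a' - b') <= t + 2 * e.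
Proof. intros. unfold Rabs in *. repeat destruct Rcase_abs; lra. Qed.

Lemma tangent_move b gamma psi t1 t2 e x y i j :
  (forall k, Rabs (S b gamma psi x k - S b gamma psi y k) <= e /\
             Rabs (S' b gamma psi x k - S' b gamma psi y k) <= e) ->
  tangent b gamma psi t1 t2 x i j -> tangent b gamma psi (t1 + 2 * e) (t2 + 2 * e) y i j.
Proof.
  intros H [H1 H2]. destruct (H i) as [A1 A2]. destruct (H j) as [B1 B2].
  split; eapply abs3; eauto.
Qed.

Lemma inE_move b gamma psi q t1 t2 t1' t2' e x y u v :
  (forall k, Rabs (S b gamma psi x k - S b gamma psi y k) <= e /\
             Rabs (S' b gamma psi x k - S' b gamma psi y k) <= e) ->
  t1 + 2 * e <= t1' -> t2 + 2 * e <= t2' ->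
  inE b gamma psi q x t1 t2 u v -> inE b gamma psi q y t1' t2' u v.
Proof.
  intros H h1 h2 [Hu [Hv [s1 [s2 [D1 [D2 T]]]]]]. split; [auto|split; [auto|]].
  exists s1, s2; split; [auto|split; [auto|]].
  apply (tangent_move b gamma psi t1 t2 e x y) in T; auto. destruct T; split; lra.
Qed.

Lemma inE_sym b gamma psi q t1 t2 x u v :
  inE b gamma psi q x t1 t2 u v -> inE b gamma psi q x t1 t2 v u.
Proof.
  intros [Hu [Hv [s1 [s2 [D1 [D2 [T1 T2]]]]]]]. split; [auto|split; [auto|]].
  exists s2, s1; repeat split; auto; rewrite Rabs_minus_sym; auto.
Qed.

Lemma inE_refl b gamma psi q t1 t2 x u : (1 <= b)%nat -> 0 <= t1 -> 0 <= t2 ->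
  In u (words b q) -> inE b gamma psi q x t1 t2 u u.
Proof.
  intros Hb h1 h2 Hu. split; [auto|split; [auto|]].
  exists (fun _ => O), (fun _ => O). repeat split; try (intros n; lia);
  rewrite Rminus_diag, Rabs_R0; auto.
Qed.

Lemma grid rho x : 0 < rho -> 0 <= x -> exists n : nat,
  INR n * (rho / 2) - rho < x < INR n * (rho / 2) + rho.
Proof.
  intros Hr Hx. destruct (archimed (x / (rho / 2))) as [H1 H2].
  assert (Hz : (0 <= up (x / (rho / 2)))%Z).
  { apply le_IZR. assert (0 <= x / (rho / 2)) by (unfold Rdiv; apply Rmult_le_pos; [lra|apply Rlt_le, Rinv_0_lt_compat; lra]). lra. }
  exists (Z.to_nat (up (x / (rho / 2)))). rewrite INR_IZR_INZ, Z2Nat.id by auto.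
  assert (E : x = x / (rho / 2) * (rho / 2)) by (field; lra).
  set (t := x / (rho / 2)) in *. set (z := IZR (up t)) in *. split; nra.
Qed.

Lemma bool_of_true (P : Prop) : P -> bool_of P = true.
Proof. intros H; unfold bool_of; destruct excluded_middle_informative; tauto. Qed.

Theorem lemma2p10 (b : nat) (gamma : R) (psi : R -> R)
  (Hb : (2 <= b)%nat) (Hgamma : 1 / INR b < gamma < 1)
  (Hper : forall x, psi (x + 1) = psi x)
  (HC1 : exists dpsi : R -> R,
      (forall x, derivable_pt_lim psi x (dpsi x)) /\ continuity dpsi)
  (q : nat) (Hq : (1 <= q)%nat)
  (eps delta : R) (K : R -> Prop)
  (Heps : 0 < eps) (Hdelta : 0 < delta)
  (HK : borel K) (HK01 : forall x, K x -> 0 <= x < 1)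
  (Hi1 : forall x, 0 <= x < 1 -> K x -> e b gamma psi q x eps delta = 1%nat)
  (Hi2 : forall x, 0 <= x < 1 -> ~ K x -> (e b gamma psi q x eps delta <= 2)%nat)
  (Hii : forall x u v, 0 <= x < 1 -> ~ K x ->
      inE b gamma psi q x eps delta u v -> u <> v ->
      K (xw b x u) /\ K (xw b x v)) :
  sigma_le b gamma psi q (sqrt 2).
Proof.
  destruct HC1 as [dpsi [Hd Hc]].
  assert (Hbr : 2 <= INR b) by (apply le_INR in Hb; simpl in Hb; lra).
  assert (Hg : 0 < gamma < 1).
  { split; [|lra]. eapply Rlt_trans; [|apply Hgamma]. unfold Rdiv; rewrite Rmult_1_l.
    apply Rinv_0_lt_compat; lra. }
  assert (Hpd := dper psi dpsi Hper Hd).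
  assert (Hcpsi : continuity psi).
  { intros x. apply derivable_continuous_pt. exists (dpsi x). apply Hd. }
  destruct (per_bound psi Hper Hcpsi) as [M1 [HM1 HB1]].
  destruct (per_bound dpsi Hpd Hc) as [M2 [HM2 HB2]].
  assert (HM : forall x, Rabs (psi x) <= M1 + M2) by (intros x; specialize (HB1 x); lra).
  assert (HM' : forall x, Rabs (dpsi x) <= M1 + M2) by (intros x; specialize (HB2 x); lra).
  set (et := Rmin eps delta / 8).
  assert (Het : 0 < et) by (unfold et; apply Rmin_case; lra).
  assert (Het1 : et <= eps / 8) by (unfold et; pose proof (Rmin_l eps delta); lra).
  assert (Het2 : et <= delta / 8) by (unfold et; pose proof (Rmin_r eps delta); lra).
  destruct (equicont b gamma psi dpsi (M1 + M2) Hb Hg HM HM' Hd Hc Hpd et Het)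
    as [rho [Hrho Hcont]].
  set (G := fun u v x => exists n : nat,
     (INR n * (rho / 2) - rho < x < INR n * (rho / 2) + rho) /\
     inE b gamma psi q (INR n * (rho / 2)) (3 * eps / 4) (3 * delta / 4) u v).
  assert (HGb : forall u v, borel (G u v)).
  { intros u v. unfold G. apply (borel_ext (fun x => exists n : nat,
      inE b gamma psi q (INR n * (rho / 2)) (3 * eps / 4) (3 * delta / 4) u v /\
      (INR n * (rho / 2) - rho < x < INR n * (rho / 2) + rho))).
    { intros x; split; intros [n Hn]; exists n; tauto. }
    apply borel_union; intros n. apply borel_and; [apply borel_const | apply borel_interval]. }
  assert (toG : forall u v x, 0 <= x ->
     inE b gamma psi q x (eps / 2) (delta / 2) u v -> G u v x).
  { intros u v x Hx H. destruct (grid rho x Hrho Hx) as [n Hn]. exists n. split; auto.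
    eapply inE_move; [| | | exact H].
    - intros k. apply Hcont. apply Rabs_def1; lra.
    - lra. - lra. }
  assert (fromG : forall u v x, G u v x -> inE b gamma psi q x eps delta u v).
  { intros u v x [n [Hn H]]. eapply inE_move; [| | | exact H].
    - intros k. apply Hcont. apply Rabs_def1; lra.
    - lra. - lra. }
  set (V := fun x (u v : list nat) => if leq u v then 1 else
              if excluded_middle_informative (G u v x) then 1 else 0).
  set (w := fun x => if excluded_middle_informative (K x) then sqrt 2 else 1).
  assert (Hs2 : sqrt 2 * sqrt 2 = 2) by (apply sqrt_sqrt; lra).
  assert (Hs0 : 0 <= sqrt 2) by apply sqrt_pos.
  assert (Hs1 : 1 <= sqrt 2) by nra.
  assert (Hs3 : sqrt 2 <= 2) by nra.
  assert (Hw : forall x, 1 <= w x <= sqrt 2).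
  { intros x; unfold w; destruct excluded_middle_informative; lra. }
  assert (HV0 : forall x u v, 0 <= V x u v).
  { intros; unfold V; destruct leq; [lra|destruct excluded_middle_informative; lra]. }
  assert (F1 : forall x u v, In u (words b q) -> In v (words b q) ->
     V x u v <= if bool_of (inE b gamma psi q x eps delta u v) then 1 else 0).
  { intros x u v Hu Hv. unfold V. destruct (leq u v).
    - subst. rewrite bool_of_true; [lra|]. apply inE_refl; auto; lia || lra.
    - destruct excluded_middle_informative as [HG|]; [|destruct bool_of; lra].
      rewrite bool_of_true; [lra|]. auto. }
  intros eta Heta. exists w, V. split; [|split].
  -
    split; [apply meas_step; auto|]. split.
    + intros x _; pose proof (Hw x); lra.
    + exists 2. intros x _. pose proof (Hw x). split; [lra|].
      unfold Rdiv; rewrite Rmult_1_l. apply Rle_trans with 1; [|lra].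
      rewrite <- Rinv_1. apply Rinv_le_contravar; lra.
  -
    split; [|split].
    + intros u v _ _. unfold V. destruct (leq u v); [apply meas_const | apply meas_step; auto].
    + intros; apply HV0.
    + exists (eps / 2), (delta / 2). split; [lra|split; [lra|]].
      intros x u v Hx H. unfold V. destruct (leq u v) as [->|Hne].
      * destruct (leq v v); [lra|tauto].
      * destruct (leq v u) as [->|Hne2]; [tauto|].
        destruct excluded_middle_informative as [|Hn1]; [|exfalso; apply Hn1; apply toG; [lra|auto]].
        destruct excluded_middle_informative as [|Hn2]; [lra|exfalso; apply Hn2; apply toG; [lra|]].
        apply inE_sym; auto.
  -
    assert (Hbound : forall x, 0 <= x < 1 -> Sigma b q V w x <= sqrt 2).
    { intros x Hx. unfold Sigma. apply fold_max_le; [lra|]. intros u Hu.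
      set (Sm := fold_right Rplus 0 (map (fun v => V x u v) (words b q))).
      assert (HS0 : 0 <= Sm) by (apply sum_nonneg; intros; apply HV0).
      assert (HSe : Sm <= INR (e b gamma psi q x eps delta)).
      { apply Rle_trans with (fold_right Rplus 0 (map (fun v =>
          if bool_of (inE b gamma psi q x eps delta u v) then 1 else 0) (words b q))).
        - apply sum_le_list; intros; apply F1; auto.
        - rewrite sum_ind_filter. apply le_INR. unfold e.
          apply (In_le_max (fun k => length (filter (fun l => bool_of
            (inE b gamma psi q x eps delta k l)) (words b q)))); auto. }
      pose proof (Hw x) as Hwx. pose proof (Hw (xw b x u)) as Hwy.
      destruct (classic (K x)) as [Kx|nKx].
      + rewrite (Hi1 x Hx Kx) in HSe. simpl in HSe.
        assert (E : w x = sqrt 2) by (unfold w; destruct excluded_middle_informative; tauto).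
        rewrite E. apply Rle_trans with (sqrt 2 / w (xw b x u) * 1).
        * apply Rmult_le_compat_l; [|lra]. unfold Rdiv; apply Rmult_le_pos; [lra|].
          apply Rlt_le, Rinv_0_lt_compat; lra.
        * rewrite Rmult_1_r. unfold Rdiv. apply Rle_trans with (sqrt 2 * 1); [|lra].
          apply Rmult_le_compat_l; [lra|]. rewrite <- Rinv_1. apply Rinv_le_contravar; lra.
      + assert (E : w x = 1) by (unfold w; destruct excluded_middle_informative; tauto).
        rewrite E. destruct (classic (K (xw b x u))) as [Ky|nKy].
        * assert (E2 : w (xw b x u) = sqrt 2) by (unfold w; destruct excluded_middle_informative; tauto).
          rewrite E2. pose proof (Hi2 x Hx nKx) as He. apply le_INR in He. simpl in He.
          apply Rle_trans with (1 / sqrt 2 * 2).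
          -- apply Rmult_le_compat_l; [|lra]. unfold Rdiv; rewrite Rmult_1_l.
             apply Rlt_le, Rinv_0_lt_compat; lra.
          -- right. field_simplify; [|lra]. rewrite <- Hs2 at 1. field. lra.
        * assert (E2 : w (xw b x u) = 1) by (unfold w; destruct excluded_middle_informative; tauto).
          rewrite E2. assert (Sm <= 1); [|unfold Rdiv; rewrite Rmult_1_l, Rinv_1; lra].
          apply Rle_trans with (fold_right Rplus 0 (map (fun v =>
             if leq v u then 1 else 0) (words b q))); [|apply count_le1, NoDup_words].
          apply sum_le_list. intros v Hv. unfold V. destruct (leq u v) as [->|Hne].
          -- destruct (leq v v); [lra|tauto].
          -- destruct (leq v u) as [->|]; [tauto|].
             destruct excluded_middle_informative as [HG|]; [|lra].
             exfalso. apply nKy. apply (Hii x u v Hx nKx (fromG _ _ _ HG) Hne). }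
    intros eta' Heta'. exists (fun _ => 0), (fun _ => 0). split; [intros; lra|split].
    + intros x [Hx Hlt]. specialize (Hbound x Hx). lra.
    + intros N. induction N; simpl; lra.
Qed.
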